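(* Let $\varepsilon>0$. Then $\mathfrak{ss}_e^\varepsilon=\mathfrak{ss}_l^{(-\varepsilon,\varepsilon)}$ and $(\mathfrak{ss}_e^{\varepsilon})^\perp=(\mathfrak{ss}_l^{(-\varepsilon,\varepsilon)})^\perp$.
   Context: Let $\mathfrak S_{cc}$ be the set of all sequences $\mathbf a=\langle a_i:i\in\omega\rangle$ of rational numbers with $a_i\to0$ such that $\sum_i a_i$ is conditionally convergent (converges to a real number, with the positive terms summing to $+\infty$ and the negative terms to $-\infty$). Let $[\omega]^\omega_\omega$ be the set of infinite coinfinite subsets of $\omega$; for such $X$ with increasing enumeration $\langle i_n\rangle$, $\sum_X\mathbf a$ denotes $\sum_n a_{i_n}$. For $A\subseteq\mathbb R$: $\mathfrak{ss}_l^A$ is the least cardinality of $\mathcal X\subseteq[\omega]^\omega_\omega$ such that every $\mathbf a\in\mathfrak S_{cc}$ has some $X\in\mathcal X$ for which $\sum_X\mathbf a$ converges to a limit in $A$; $(\mathfrak{ss}_l^A)^\perp$ is the least cardinality of $\mathcal A\subseteq\mathfrak S_{cc}$ such that no $X\in[\omega]^\omega_\omega$ has $\sum_X\mathbf a$ converging to a limit in $A$ for all $\mathbf a\in\mathcal A$. For $\varepsilon>0$, $\mathfrak{ss}_e^\varepsilon$ is the least cardinality of $\mathcal X\subseteq[\omega]^\omega_\omega$ such that every $\mathbf a\in\mathfrak S_{cc}$ has some $X\in\mathcal X$ for which $\sum_X\mathbf a$ converges to a limit in the open interval $(\sum\mathbf a-\varepsilon,\sum\mathbf a+\varepsilon)$;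 $(\mathfrak{ss}_e^{\varepsilon})^\perp$ is the least cardinality of $\mathcal A\subseteq\mathfrak S_{cc}$ such that no $X\in[\omega]^\omega_\omega$ has this property for all $\mathbf a\in\mathcal A$ simultaneously. *)

(* Defs.v *)
From HB Require Import structures.
From mathcomp Require Import all_boot all_order all_algebra.
From mathcomp Require Import all_classical all_reals all_analysis.
Set Implicit Arguments. Unset Strict Implicit. Unset Printing Implicit Defensive.
Import Order.TTheory GRing.Theory Num.Theory.
Import numFieldNormedType.Exports.
Local Open Scope classical_set_scope.
Local Open Scope ring_scope.

Definition rseq (R : realType) (a : nat -> rat) : R^nat := fun n => ratr (a n).

Definition Scc (R : realType) : set (nat -> rat) := fun a =>
  [/\ rseq R a @ \oo --> (0 : R),
      cvgn (series (rseq R a)),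
      series (fun n => Num.max (rseq R a n) 0) @ \oo --> +oo
    & series (fun n => Num.min (rseq R a n) 0) @ \oo --> -oo].

Definition sumS (R : realType) (a : nat -> rat) : R := limn (series (rseq R a)).

Definition infcoinf : set (set nat) := fun X =>
  infinite_set X /\ infinite_set (~` X).

(* These are
   the partial sums of sum_n a_{i_n} (i_n the increasing enumeration of X),
   each repeated finitely often, so they converge iff the subseries does,
   and to the same limit. *)
Definition subseries (R : realType) (X : set nat) (a : nat -> rat) : R^nat :=
  series (fun n => if `[< X n >] then rseq R a n else 0).

Definition conv_in (R : realType) (X : set nat) (a : nat -> rat) (A : set R) : Prop :=
  exists l : R, A l /\ (subseries R X a : R^nat) @ \oo --> l.

Definition ssl_family (R : realType) (A : set R) : set (set (set nat)) :=
  fun F => F `<=` infcoinf /\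
    forall a, @Scc R a -> exists X, F X /\ conv_in X a A.
Definition ssl_perp_family (R : realType) (A : set R) : set (set (nat -> rat)) :=
  fun G => G `<=` @Scc R /\
    ~ (exists X, infcoinf X /\ forall a, G a -> conv_in X a A).

Definition near_sum (R : realType) (eps : R) (a : nat -> rat) : set R :=
  fun y => sumS R a - eps < y < sumS R a + eps.
Definition sse_family (R : realType) (eps : R) : set (set (set nat)) :=
  fun F => F `<=` infcoinf /\
    forall a, @Scc R a -> exists X, F X /\ conv_in X a (near_sum eps a).
Definition sse_perp_family (R : realType) (eps : R) : set (set (nat -> rat)) :=
  fun G => G `<=` @Scc R /\
    ~ (exists X, infcoinf X /\ forall a, G a -> conv_in X a (near_sum eps a)).

(* "the least cardinality of a P-family equals the least cardinality of a
   Q-family": every P-family is dominated in cardinality by some Q-family and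
   vice versa (cardinals being well-ordered, this is equality of the minima). *)
Definition min_card_eq (T : Type) (P Q : set (set T)) : Prop :=
  (forall F, P F -> exists G, Q G /\ (G #<= F)%card) /\
  (forall G, Q G -> exists F, P F /\ (F #<= G)%card).

(* Main.v *)
Require Import Defs.
From HB Require Import structures.
From mathcomp Require Import all_boot all_order all_algebra.
From mathcomp Require Import all_classical all_reals all_analysis.
Import Order.TTheory GRing.Theory Num.Theory.
Import numFieldNormedType.Exports.
Local Open Scope classical_set_scope.
Local Open Scope ring_scope.

Lemma subseries_split (R : realType) (X : set nat) (a : nat -> rat) n :
  subseries R (~` X) a n = series (rseq R a) n - subseries R X a n.
Proof.
apply/eqP; rewrite eq_sym subr_eq /subseries /series /= -big_split /=.
apply/eqP; apply: eq_bigr => k _.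
rewrite asbool_neg; case: `[< X k >] => /=; by rewrite ?addr0 ?add0r.
Qed.

Lemma subseries_compl (R : realType) (X : set nat) (a : nat -> rat) (l : R) :
  cvgn (series (rseq R a)) ->
  (subseries R X a : R^nat) @ \oo --> l ->
  (subseries R (~` X) a : R^nat) @ \oo --> sumS R a - l.
Proof.
move=> hc hl.
have -> : (subseries R (~` X) a : R^nat) =
  (fun n => series (rseq R a) n - subseries R X a n).
  by apply: funext => n; rewrite subseries_split.
exact: cvgB.
Qed.

Lemma infcoinfC (X : set nat) : infcoinf X -> infcoinf (~` X).
Proof. by move=> [h1 h2]; split => //; rewrite setCK. Qed.

Lemma key1 (R : realType) (eps : R) X a :
  cvgn (series (rseq R a)) ->
  conv_in X a (near_sum eps a) -> conv_in (~` X) a `]-eps, eps[.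
Proof.
move=> hc [l [hl cl]]; exists (sumS R a - l); split; last exact: subseries_compl.
move: hl; rewrite /near_sum /= => /andP[h1 h2].
rewrite in_itv /=; apply/andP; split.
- by rewrite ltrNl opprB ltrBlDl.
- by rewrite ltrBlDl addrC -ltrBlDl.
Qed.

Lemma key2 (R : realType) (eps : R) X a :
  cvgn (series (rseq R a)) ->
  conv_in X a `]-eps, eps[ -> conv_in (~` X) a (near_sum eps a).
Proof.
move=> hc [l [hl cl]]; exists (sumS R a - l); split; last exact: subseries_compl.
move: hl => /= /[!in_itv] /= /andP[h1 h2].
rewrite /near_sum /=; apply/andP; split.
- by rewrite ltrD2l ltrN2.
- by rewrite ltrD2l ltrNl.
Qed.

Theorem mainTheorem10 (R : realType) (eps : R) (heps : 0 < eps) :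
  min_card_eq (sse_family eps) (ssl_family `]-eps, eps[) /\
  min_card_eq (sse_perp_family eps) (ssl_perp_family `]-eps, eps[).
Proof.
have Scv : forall a, @Scc R a -> cvgn (series (rseq R a)) by move=> a [].
split; split.
- move=> F [FI FH]; exists (setC @` F); split; last exact: card_image_le.
  split; first by move=> _ [X FX <-]; apply: infcoinfC; apply: FI.
  move=> a Sa; have [X [FX cX]] := FH a Sa.
  by exists (~` X); split; [exists X | apply: key1 => //; apply: Scv].
- move=> F [FI FH]; exists (setC @` F); split; last exact: card_image_le.
  split; first by move=> _ [X FX <-]; apply: infcoinfC; apply: FI.
  move=> a Sa; have [X [FX cX]] := FH a Sa.
  by exists (~` X); split; [exists X | apply: key2 => //; apply: Scv].
- move=> G [GS GH]; exists G; split; last exact: card_lexx.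
  split => // -[X [IX HX]]; apply: GH; exists (~` X); split; first exact: infcoinfC.
  move=> a Ga; have := @key2 R eps X a (Scv a (GS a Ga)) (HX a Ga).
  by [].
- move=> G [GS GH]; exists G; split; last exact: card_lexx.
  split => // -[X [IX HX]]; apply: GH; exists (~` X); split; first exact: infcoinfC.
  move=> a Ga; have := @key1 R eps X a (Scv a (GS a Ga)) (HX a Ga).
  by [].
Qed.
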